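(* Let $(S,I_S,\psi_S)$ be a complete and perfect object of $\mathcal{C}_{p^h}$. Then for every $a\in S/I_S$ there is a unique $\widetilde a\in S$ such that $\widetilde a\equiv a \bmod I_S$ and $\psi_S(\widetilde a)=\widetilde a^{\,p^h}$.
   Context: $\mathcal{C}_{p^h}$ (for a prime $p$ and integer $h\ge1$) is the category whose objects are triples $(R,I_R,\psi_R)$ with $R$ a commutative ring, $I_R\subseteq R$ an ideal with $p\in I_R$, and $\psi_R\colon R\to R$ a ring endomorphism such that $\psi_R(x)\equiv x^{p^h}\bmod I_R$ for all $x\in R$. A morphism $(R,I_R,\psi_R)\to(S,I_S,\psi_S)$ is a ring homomorphism $\mu$ with $\mu(I_R)\subseteq I_S$ and $\mu\psi_R=\psi_S\mu$. An object is complete if $R\to\lim_k R/I_R^k$ is an isomorphism, and perfect if $\psi_R$ is an isomorphism with $\psi_R(I_R)=I_R$. *)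

(* Defs.v *)
From HB Require Import structures.
From mathcomp Require Import all_boot all_order all_algebra.
Set Implicit Arguments. Unset Strict Implicit. Unset Printing Implicit Defensive.
Import GRing.Theory.
Local Open Scope ring_scope.

Definition is_ideal (R : comPzRingType) (I : R -> Prop) : Prop :=
  [/\ I 0, (forall x y, I x -> I y -> I (x + y)), (forall x, I x -> I (- x))
    & (forall r x, I x -> I (r * x))].

Fixpoint ideal_pow (R : comPzRingType) (I : R -> Prop) (k : nat) : R -> Prop :=
  match k with
  | 0 => fun _ => True
  | k'.+1 => fun x => exists s : seq (R * R),
      (forall ab, ab \in s -> I ab.1 /\ ideal_pow I k' ab.2) /\
      x = \sum_(ab <- s) ab.1 * ab.2
  end.

Definition is_Cph_object (p h : nat) (R : comPzRingType) (I : R -> Prop)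
    (psi : {rmorphism R -> R}) : Prop :=
  [/\ is_ideal I, I (p%:R) & forall x, I (psi x - x ^+ (p ^ h))].

(* Complete: R -> lim_k R/I^k is an isomorphism, i.e. it is injective
   (the intersection of the I^k is 0) and surjective (every compatible
   family of residues, given by representatives x_k with x_m = x_k mod I^k
   for k <= m, is the image of some x). *)
Definition is_complete (R : comPzRingType) (I : R -> Prop) : Prop :=
  (forall x : R, (forall k, ideal_pow I k x) -> x = 0) /\
  (forall xs : nat -> R,
      (forall k m, (k <= m)%N -> ideal_pow I k (xs m - xs k)) ->
      exists x : R, forall k, ideal_pow I k (x - xs k)).

Definition is_perfect (R : comPzRingType) (I : R -> Prop)
    (psi : {rmorphism R -> R}) : Prop :=
  bijective psi /\
  (forall x, I x -> I (psi x)) /\ (forall y, I y -> exists x, I x /\ psi x = y).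

(* Main.v *)
Require Import Defs.
From mathcomp Require Import all_boot all_order all_algebra.
Local Open Scope ring_scope.
Import GRing.Theory.

Lemma ipow_ideal {S : comPzRingType} {I : S -> Prop} :
  is_ideal I -> forall k, is_ideal (ideal_pow I k).
Proof.
move=> [I0 ID IN IM]; elim=> [|k IH] /=; first by split.
split.
- by exists [::]; rewrite big_nil.
- move=> x y [s1 [H1 ->]] [s2 [H2 ->]]; exists (s1 ++ s2); rewrite big_cat; split=> //.
  by move=> ab; rewrite mem_cat => /orP [/H1|/H2].
- move=> x [s [H ->]]; exists [seq (- ab.1, ab.2) | ab <- s]; split.
    by move=> ab /mapP [ab' /H [? ?] ->] /=; split=> //; apply: IN.
  by rewrite big_map -sumrN; apply: eq_bigr => ab _; rewrite mulNr.
- move=> r x [s [H ->]]; exists [seq (r * ab.1, ab.2) | ab <- s]; split.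
    by move=> ab /mapP [ab' /H [? ?] ->] /=; split=> //; apply: IM.
  by rewrite big_map mulr_sumr; apply: eq_bigr => ab _; rewrite mulrA.
Qed.

Lemma ipow_S {S : comPzRingType} {I : S -> Prop} k x :
  is_ideal I -> ideal_pow I k.+1 x -> ideal_pow I k x.
Proof.
move=> II; have [I0 ID IN IM] := ipow_ideal II k.
move=> [s [H ->]]; rewrite big_seq; apply: (big_ind (ideal_pow I k)) => //.
by move=> ab /H [_ ?]; apply: IM.
Qed.

Lemma ipow_mono {S : comPzRingType} {I : S -> Prop} k m x :
  is_ideal I -> (k <= m)%N -> ideal_pow I m x -> ideal_pow I k x.
Proof.
move=> II; elim: m => [|m IH]; first by rewrite leqn0 => /eqP ->.
rewrite leq_eqVlt => /orP [/eqP -> //|]; rewrite ltnS => km H.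
by apply: IH km _; apply: ipow_S.
Qed.

Lemma ipow1 {S : comPzRingType} {I : S -> Prop} x :
  is_ideal I -> ideal_pow I 1 x <-> I x.
Proof.
move=> II; case: (II) => I0 ID IN IM; split.
  move=> [s [H ->]]; rewrite big_seq; apply: (big_ind I) => //.
  by move=> ab /H [? _]; rewrite mulrC; apply: IM.
move=> Ix; exists [:: (x, 1)]; split.
  by move=> ab; rewrite mem_seq1 => /eqP -> /=.
by rewrite big_seq1 mulr1.
Qed.

Lemma ipow_mul {S : comPzRingType} {I : S -> Prop} k u d :
  I u -> ideal_pow I k d -> ideal_pow I k.+1 (u * d).
Proof.
move=> Iu Id; exists [:: (u, d)]; split.
  by move=> ab; rewrite mem_seq1 => /eqP -> /=.
by rewrite big_seq1.
Qed.

Lemma powmod {S : comPzRingType} {I : S -> Prop} a b n :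
  is_ideal I -> I (a - b) -> I (a ^+ n - b ^+ n).
Proof.
move=> [I0 ID IN IM] H; rewrite subrXX mulrC; exact: IM.
Qed.

Lemma key {S : comPzRingType} {I : S -> Prop} (p h k : nat) a b :
  (0 < p)%N -> is_ideal I -> I p%:R -> (1 <= h)%N -> (1 <= k)%N ->
  ideal_pow I k (a - b) -> ideal_pow I k.+1 (a ^+ (p ^ h) - b ^+ (p ^ h)).
Proof.
move=> p0 II Ip h1 k1 Hk; have [I0 ID IN IM] := II.
have Iab : I (a - b) by apply/(ipow1 _ II); apply: ipow_mono Hk.
rewrite subrXX mulrC; apply: ipow_mul => //.
set q := (p ^ h)%N.
have -> : \sum_(i < q) a ^+ (q.-1 - i) * b ^+ i =
   \sum_(i < q) (a ^+ (q.-1 - i) * b ^+ i - b ^+ q.-1) + q%:R * b ^+ q.-1.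
  by rewrite sumrB sumr_const card_ord mulr_natl subrK.
apply: (ID).
  apply: (big_ind I); [exact: I0 | exact: ID | move=> i _].
  have -> : a ^+ (q.-1 - i) * b ^+ i - b ^+ q.-1 =
            (a ^+ (q.-1 - i) - b ^+ (q.-1 - i)) * b ^+ i.
    rewrite mulrBl -exprD subnK //; rewrite -ltnS prednK ?ltn_ord //.
    by rewrite expn_gt0 p0.
  rewrite mulrC; apply: IM; exact: powmod.
rewrite /q -(prednK h1) expnS natrM -mulrA mulrC; apply: IM; exact: Ip.
Qed.

Theorem corollary2p2 (p h : nat) (S : comPzRingType) (I : S -> Prop)
    (psi : {rmorphism S -> S}) :
  prime p -> (1 <= h)%N ->
  is_Cph_object p h I psi -> is_complete I -> is_perfect I psi ->
  forall x : S, exists y : S,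
    (I (y - x) /\ psi y = y ^+ (p ^ h)) /\
    (forall z : S, I (z - x) -> psi z = z ^+ (p ^ h) -> z = y).
Proof.
move=> pr h1 [II Ip Hpsi] [Cinj Csurj] [[g gK Kg] [psiI psiIinv]] x.
have p0 := prime_gt0 pr.
case: (II) => I0 ID IN IM.
have ginj := can_inj gK.
have gB a b : g (a - b) = g a - g b by apply: ginj; rewrite rmorphB !Kg.
have gD a b : g (a + b) = g a + g b by apply: ginj; rewrite rmorphD !Kg.
have gM a b : g (a * b) = g a * g b by apply: ginj; rewrite rmorphM !Kg.
have g0 : g 0 = 0 by apply: ginj; rewrite rmorph0 Kg.
have gI y : I y -> I (g y).
  by move=> /psiIinv [z [Iz <-]]; rewrite gK.
have gsum (s : seq (S * S)) :
    g (\sum_(ab <- s) ab.1 * ab.2) = \sum_(ab <- s) g ab.1 * g ab.2.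
  elim: s => [|ab s IH]; first by rewrite !big_nil g0.
  by rewrite !big_cons gD gM IH.
have gIk k y : ideal_pow I k y -> ideal_pow I k (g y).
  elim: k y => [//|k IH] y [s [H ->]].
  exists [seq (g ab.1, g ab.2) | ab <- s]; split.
    by move=> ab /mapP [ab' /H [? ?] ->] /=; split; [apply: gI | apply: IH].
  by rewrite big_map gsum.
pose q := (p ^ h)%N.
pose T z := g (z ^+ q).
have Tmod z : I (T z - z).
  rewrite /T -{2}(gK z) -gB; apply: gI.
  by rewrite -opprB; apply: IN; apply: Hpsi.
have Tcontr k a b : (1 <= k)%N -> ideal_pow I k (a - b) ->
    ideal_pow I k.+1 (T a - T b).
  by move=> k1 H; rewrite /T -gB; apply: gIk; apply: key.
pose Tn n := iter n T x.
have step n : ideal_pow I n.+1 (Tn n.+1 - Tn n).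
  elim: n => [|n IH]; first by apply/(ipow1 _ II); apply: Tmod.
  by apply: Tcontr.
have cauchy k m : (k <= m)%N -> ideal_pow I k (Tn m - Tn k).
  elim: m => [|m IH]; first by rewrite leqn0 => /eqP ->; rewrite subrr; case: (ipow_ideal II 0).
  rewrite leq_eqVlt => /orP [/eqP ->|]; first by rewrite subrr; case: (ipow_ideal II m.+1).
  rewrite ltnS => km.
  have -> : Tn m.+1 - Tn k = (Tn m.+1 - Tn m) + (Tn m - Tn k) by rewrite addrA subrK.
  case: (ipow_ideal II k) => _ IDk _ _; apply: IDk; last exact: IH.
  by apply: (ipow_mono _ _ _ II _ (step m)); exact: ltnW.
have [y Hy] := Csurj Tn cauchy.
have allk0 z : (forall k, ideal_pow I k.+1 z) -> z = 0.
  by move=> H; apply: Cinj => -[|k].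
have Tfix : T y = y.
  apply/eqP; rewrite -subr_eq0; apply/eqP; apply: allk0 => k.
  apply: (ipow_mono _ _ _ II (leqnSn k.+1)).
  have -> : T y - y = (T y - T (Tn k.+1)) - (y - Tn k.+2) by rewrite opprB addrA subrK.
  case: (ipow_ideal II k.+2) => _ IDk INk _; apply: IDk; last by apply: INk.
  exact: (Tcontr _ _ _ _ (Hy k.+1)).
have Hyx : I (y - x).
  have -> : y - x = (y - Tn 1) + (Tn 1 - x) by rewrite addrA subrK.
  apply: (ID); last exact: Tmod.
  by apply/(ipow1 _ II).
exists y; split.
  split; first exact: Hyx.
  by rewrite -{1}Tfix /T Kg.
move=> z Hz Pz.
have Tz : T z = z by rewrite /T -Pz gK.
have Hzy : I (z - y).
  have -> : z - y = (z - x) - (y - x) by rewrite opprB addrA subrK.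
  by apply: ID => //; apply: IN.
apply/eqP; rewrite -subr_eq0; apply/eqP; apply: allk0 => k.
elim: k => [|k IH]; first by apply/(ipow1 _ II).
by rewrite -Tz -Tfix; apply: Tcontr.
Qed.
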